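(* Let $\mathit{GF}(q)$ be a finite field with $q=p^n$, $p$ prime. If $F_{q,\phi}$ and $F_{q,\phi}^{\dagger}$ can be performed for some nonzero $\mathit{GF}(p)$-linear map $\phi:\mathit{GF}(q)\to\mathit{GF}(p)$, then there is a quantum algorithm making a single query to the black box that solves the quantum hidden linear structure problem over $\mathit{GF}(q)$ exactly (i.e. outputs $s$ with probability $1$).
   Context: $F_{q,\phi}$ is the unitary on the space with orthonormal basis $\{\ket{x}:x\in\mathit{GF}(q)\}$ defined by $F_{q,\phi}\ket{x}=\frac{1}{\sqrt q}\sum_{y\in \mathit{GF}(q)}\omega^{\phi(xy)}\ket{y}$, $\omega=e^{2\pi i/p}$ (elements of $\mathit{GF}(p)$ in the exponent identified with integers $0,\dots,p-1$; $\mathit{GF}(q)$ viewed as an $n$-dimensional vector space over $\mathit{GF}(p)$). The quantum hidden linear structure problem over $\mathit{GF}(q)$: one is given a black box performing the unitary $\ket{x}\ket{y}\mapsto\ket{x}\ket{\pi(y+sx)}$ on two $\mathit{GF}(q)$-valued registers, where $\pi$ is an unknown permutation of $\mathit{GF}(q)$ and $s\in\mathit{GF}(q)$ is unknown; the goal is to determine $s$. *)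

(* Defs.v *)
From HB Require Import structures.
From mathcomp Require Import all_boot all_order all_algebra all_fingroup.
Set Implicit Arguments. Unset Strict Implicit. Unset Printing Implicit Defensive.
Import Order.TTheory GRing.Theory Num.Theory.
Local Open Scope ring_scope.

(* The amplitude field C is any numeric closed field (e.g. algC, or the
   complex numbers); w is a primitive p-th root of unity (e.g. e^{2 pi i/p}).
   A state of the two GF(q)-valued registers is a function F * F -> C
   (amplitude of the basis vector |x>|y>). *)

Section QHLS.
Variables (F : finFieldType) (p : nat) (C : numClosedFieldType) (w : C).
Variable phi : F -> 'F_p.

Definition state := (F * F)%type -> C.

Definition fourier_coef (x y : F) : C :=
  (sqrtC (#|F|%:R))^-1 * w ^+ (nat_of_ord (phi (x * y))).

Definition F1 (v : state) : state :=
  fun z => \sum_(x : F) fourier_coef x z.1 * v (x, z.2).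
Definition F2 (v : state) : state :=
  fun z => \sum_(y : F) fourier_coef y z.2 * v (z.1, y).
Definition Fdag1 (v : state) : state :=
  fun z => \sum_(x : F) (fourier_coef z.1 x)^* * v (x, z.2).
Definition Fdag2 (v : state) : state :=
  fun z => \sum_(y : F) (fourier_coef z.2 y)^* * v (z.1, y).

Definition perm_gate (sigma : {perm (F * F)}) (v : state) : state :=
  fun z => v ((sigma^-1)%g z).

(* the black box |x>|y> |-> |x>|pi(y + s x)> *)
Definition oracle (pi : {perm F}) (s : F) (v : state) : state :=
  fun z => v (z.1, (pi^-1)%g z.2 - s * z.1).

Inductive gate : Type :=
  | GF1 | GF2 | GFdag1 | GFdag2 | GPerm of {perm (F * F)}.

Definition apply_gate (g : gate) : state -> state :=
  match g with
  | GF1 => F1 | GF2 => F2 | GFdag1 => Fdag1 | GFdag2 => Fdag2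
  | GPerm sigma => perm_gate sigma
  end.

Definition run (c : seq gate) (v : state) : state :=
  foldl (fun v g => apply_gate g v) v c.

Definition basis (z0 : F * F) : state := fun z => (z == z0)%:R.

(* A single-query algorithm: start in a computational basis state, apply a
   circuit of allowed gates, make one query, apply another circuit, measure
   both registers in the computational basis and post-process classically. *)
Record one_query_alg : Type := OneQueryAlg {
  alg_init : F * F;
  alg_pre  : seq gate;
  alg_post : seq gate;
  alg_out  : F * F -> F
}.

Definition final_state (A : one_query_alg) (pi : {perm F}) (s : F) : state :=
  run (alg_post A) (oracle pi s (run (alg_pre A) (basis (alg_init A)))).

Definition success_prob (A : one_query_alg) (pi : {perm F}) (s : F) : C :=
  \sum_(z : F * F | alg_out A z == s) `|final_state A pi s z| ^+ 2.

End QHLS.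

(* phi : GF(q) -> GF(p) is GF(p)-linear; the GF(p)-action on GF(q) is
   c . x = (c as integer 0..p-1)%:R * x. *)
Definition Fp_linear (F : finFieldType) (p : nat) (phi : F -> 'F_p) : Prop :=
  (forall x y, phi (x + y) = phi x + phi y) /\
  (forall (c : 'F_p) x, phi ((nat_of_ord c)%:R * x) = c * phi x).

(* Main.v *)
Require Import Defs.
From HB Require Import structures.
From mathcomp Require Import all_boot all_order all_algebra all_fingroup.
From mathcomp Require Import ring.
Set Implicit Arguments. Unset Strict Implicit.
Import Order.TTheory GRing.Theory Num.Theory.
Local Open Scope ring_scope.

Section Aux.
Variables (F : finFieldType) (p : nat) (C : numClosedFieldType) (w : C).
Variable phi : F -> 'F_p.
Hypothesis pr_p : prime p.
Hypothesis prim_w : p.-primitive_root w.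
Hypothesis phiD : forall x y, phi (x + y) = phi x + phi y.

Definition chi (a : 'F_p) : C := w ^+ (nat_of_ord a).

Lemma chiD a b : chi (a + b) = chi a * chi b.
Proof.
rewrite /chi -exprD /=.
have h : forall n, w ^+ (n %% (Zp_trunc (pdiv p)).+2) = w ^+ n.
  by move=> n; rewrite Fp_cast // prim_expr_mod.
by rewrite h.
Qed.

Lemma chi0 : chi 0 = 1.
Proof. by rewrite /chi expr0. Qed.

Lemma normw : `|w| = 1.
Proof.
have p0 : (0 < p)%N by apply: prime_gt0.
apply: (pexpIrn p0); rewrite ?qualifE /= ?normr_ge0 ?ler01 //.
by rewrite -normrX (prim_expr_order prim_w) normr1 expr1n.
Qed.

Lemma normchi a : `|chi a| = 1.
Proof. by rewrite /chi normrX normw expr1n. Qed.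

Lemma chiN a : chi (- a) * chi a = 1.
Proof. by rewrite -chiD addNr chi0. Qed.

Lemma conjchi a : (chi a)^* = chi (- a).
Proof.
have h : chi a * (chi a)^* = 1 by rewrite -normCK normchi expr1n.
have h2 := chiN a.
by rewrite -[LHS]mul1r -h2 -mulrA h mulr1.
Qed.

Lemma phi0 : phi 0 = 0.
Proof. by apply: (addrI (phi 0)); rewrite -phiD !addr0. Qed.

Lemma phiN x : phi (- x) = - phi x.
Proof. by apply: (addrI (phi x)); rewrite -phiD !subrr phi0. Qed.

Lemma chisum (x0 : F) : phi x0 != 0 -> forall a : F,
  \sum_(x : F) chi (phi (a * x)) = (a == 0)%:R * #|F|%:R.
Proof.
move=> nz a; have [->|a0] := eqVneq a 0.
  under eq_bigr do rewrite mul0r phi0 chi0.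
  by rewrite sumr_const mul1r.
rewrite mul0r.
have hS : \sum_x chi (phi (a * x)) = chi (phi x0) * \sum_x chi (phi (a * x)).
  rewrite big_distrr [LHS](reindex_inj (addIr (a^-1 * x0))) /=.
  apply: eq_bigr => x _.
  by rewrite mulrDr mulrA mulfV // mul1r phiD chiD mulrC.
have hne : chi (phi x0) != 1.
  rewrite /chi -(prim_order_dvd prim_w).
  have k0 : (0 < phi x0)%N.
    by rewrite lt0n; apply: contra nz => /eqP h; apply/eqP/val_inj.
  have klt : (phi x0 < p)%N.
    by apply: leq_trans (ltn_ord _) _; rewrite Fp_cast.
  by apply/negP => /(dvdn_leq k0); rewrite leqNgt klt.
move: hS; set S := \sum_x _ => /eqP.
rewrite -subr_eq0 -{1}(mul1r S) -mulrBl mulf_eq0.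
by rewrite subr_eq0 eq_sym (negbTE hne) => /eqP.
Qed.

End Aux.

Theorem theorem4 (F : finFieldType) (p : nat) (C : numClosedFieldType) (w : C)
    (phi : F -> 'F_p) :
  prime p -> p \in [pchar F] -> p.-primitive_root w ->
  Fp_linear phi -> (exists x, phi x != 0) ->
  exists A : one_query_alg F,
    forall (pi : {perm F}) (s : F), success_prob w phi A pi s = 1.
Proof.
move=> pr_p _ prim_w [phiD _] [x0 nz].
exists (OneQueryAlg (0,1) [:: @GF1 F; @GF2 F] [:: @GFdag1 F] (fun z => - z.1)) => pi s.
set q : C := #|F|%:R.
set c : C := (sqrtC q)^-1.
have q0 : q != 0.
  by rewrite pnatr_eq0 -lt0n; apply/card_gt0P; exists 0.
have qge0 : 0 <= q by rewrite ler0n.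
have cge0 : 0 <= c by rewrite invr_ge0 sqrtC_ge0.
have c2 : c ^+ 2 = q^-1 by rewrite exprVn sqrtCK.
have conjM : forall a b : C, (a * b)^* = a^* * b^* by move=> a b; rewrite rmorphM.
have fcE : forall x y, fourier_coef w phi x y = c * chi w (phi (x * y)) by [].
have fc0 : forall y, fourier_coef w phi 0 y = c.
  by move=> y; rewrite fcE mul0r (phi0 phiD) chi0 mulr1.
have s1 : forall z, F1 w phi (basis C (0,1)) z = c * (z.2 == 1)%:R.
  move=> z; rewrite /F1 (bigD1 0) //= big1 ?addr0.
    by rewrite fc0 /basis xpair_eqE eqxx.
  by move=> x /negbTE xn; rewrite /basis xpair_eqE xn mulr0.
have s2 : forall z, F2 w phi (F1 w phi (basis C (0,1))) z = c ^+ 2 * chi w (phi z.2).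
  move=> z; rewrite /F2 (bigD1 1) //= big1 ?addr0 => [| y /negbTE yn]; last first.
    by rewrite s1 /= (_ : (y == 1) = false) ?mulr0 //; apply: negbTE.
  by rewrite s1 /= eqxx fcE mul1r mulr1 mulrAC expr2.
have s3 : forall z, final_state w phi
      (OneQueryAlg (0,1) [:: @GF1 F; @GF2 F] [:: @GFdag1 F] (fun z => - z.1)) pi s z
    = c ^+ 3 * q * chi w (phi ((pi^-1)%g z.2)) * (z.1 == - s)%:R.
  move=> z; rewrite /final_state /run /= /Fdag1.
  set u := (pi^-1)%g z.2.
  transitivity (\sum_(x : F) c ^+ 3 * chi w (phi u) * chi w (phi (- (z.1 + s) * x))).
    apply: eq_bigr => x _.
    rewrite /oracle /= s2 /= fcE conjM (conjchi pr_p prim_w) (geC0_conj cge0).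
    have -> : phi (- (z.1 + s) * x) = - phi (z.1 * x) + - phi (s * x).
      by rewrite mulNr (phiN phiD) mulrDl phiD opprD.
    rewrite phiD (phiN phiD) !(chiD pr_p prim_w); ring.
  rewrite -big_distrr /= (chisum pr_p prim_w phiD nz) oppr_eq0 addr_eq0.
  by rewrite -/q; ring.
rewrite /success_prob /=.
have nE : forall z : F * F, - z.1 == s ->
    `|final_state w phi (OneQueryAlg (0,1) [:: @GF1 F; @GF2 F] [:: @GFdag1 F] (fun z => - z.1)) pi s z| ^+ 2 = q^-1.
  move=> z /eqP hz; rewrite s3 -hz opprK eqxx mulr1 !normrM normrX (normw pr_p prim_w) expr1n mulr1.
  have cc : c * c = q^-1 by rewrite -expr2.
  by rewrite ger0_norm // [`|q|]ger0_norm // cc (divfK q0) c2.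
rewrite (eq_bigr (fun _ => q^-1)) //.
have -> : \sum_(z : F * F | - z.1 == s) q^-1 = \sum_(x : F | x == - s) \sum_(y : F | true) q^-1.
  rewrite pair_big /=; apply: eq_bigl => z.
  by rewrite andbT -eqr_oppLR eq_sym.
rewrite big_pred1_eq sumr_const -[q^-1 *+ _]mulr_natr -/q mulVf //.
Qed.
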